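(* Let $K=2$ and let $n_1,n_2$ be nonnegative integers; put $s \coloneqq \min(n_1,n_2)$ and $l \coloneqq \max(n_1,n_2)$. If $l > s > 0$, then \[ h(s+1,\,l) \;\geq\; h(s,\,l+1). \]
   Context: Fix an integer $K\ge 2$. An initial assortment is a vector $\vec n=(n_1,\dots,n_K)$ of nonnegative integers ($n_i$ is the initial stock of goodie type $i$). The following random process is run: the stocks start at $\vec n^{(0)}=\vec n$; at each step $t=1,2,\dots$, as long as at least two coordinates of the current stock vector $\vec n^{(t-1)}$ are nonzero, an index $i$ is chosen uniformly at random (independently of the past) among the indices with $n_i^{(t-1)}>0$, and $\vec n^{(t)}=\vec n^{(t-1)}-\vec e_i$, where $\vec e_i$ is the $i$-th standard unit vector. The process stops at the first time $T$ at which at most one coordinate of $\vec n^{(T)}$ is nonzero. Define $h(\vec n)=\mathbb{E}[T]$ (the expected number of ''happy'' attendees). Equivalently, with $\operatorname{support}(\vec n)=\{i : n_i\neq 0\}$: $h(\vec n)=0$ if $|\operatorname{support}(\vec n)|\le 1$, and otherwise $h(\vec n)=1+\frac{1}{|\operatorname{support}(\vec n)|}\sum_{i\in\operatorname{support}(\vec n)} h(\vec n-\vec e_i)$. *)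

(* Defs.v *)
From mathcomp Require Import all_boot all_order all_algebra.
Set Implicit Arguments. Unset Strict Implicit. Unset Printing Implicit Defensive.
Import Order.TTheory GRing.Theory Num.Theory.
Local Open Scope ring_scope.

(* An assortment of K goodie types: a vector of stocks. *)
Definition assortment (K : nat) := {ffun 'I_K -> nat}.

Definition support K (n : assortment K) : {set 'I_K} := [set i | n i != 0%N].

Definition dec K (n : assortment K) (i : 'I_K) : assortment K :=
  [ffun j => if j == i then (n j).-1 else n j].

(* Fuel-based evaluation of the recursion
   h(n) = 0 if |support n| <= 1,
   h(n) = 1 + 1/|support n| * sum_{i in support n} h(n - e_i) otherwise.
   The fuel decreases along with the total stock, so fuel = sum of stocks
   suffices. *)
Fixpoint h_fuel K (fuel : nat) (n : assortment K) : rat :=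
  match fuel with
  | 0%N => 0
  | f.+1 =>
      if (#|support n| <= 1)%N then 0
      else 1 + #|support n|%:R^-1 * \sum_(i in support n) h_fuel f (dec n i)
  end.

Definition h K (n : assortment K) : rat := h_fuel (\sum_(i < K) n i)%N n.

Definition asst2 (a b : nat) : assortment 2 :=
  [ffun i : 'I_2 => if i == ord0 then a else b].

(* Main.v *)
Require Import Defs.
From mathcomp Require Import all_boot all_order all_algebra.
From mathcomp Require Import zify.
Import Order.TTheory GRing.Theory Num.Theory.
Local Open Scope ring_scope.

Lemma dec0 a b : dec (asst2 a b) ord0 = asst2 a.-1 b.
Proof. by apply/ffunP => -[[|[|i]] Hi]; rewrite !ffunE. Qed.
Lemma dec1 a b : dec (asst2 a b) (lift ord0 ord0) = asst2 a b.-1.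
Proof. by apply/ffunP => -[[|[|i]] Hi]; rewrite !ffunE. Qed.

Lemma step f a b : h_fuel f.+1 (asst2 a b) =
  if (a == 0%N) || (b == 0%N) then 0 else
  1 + 2%:R^-1 * (h_fuel f (asst2 a.-1 b) + h_fuel f (asst2 a b.-1)).
Proof.
cbn [h_fuel].
have Hc : #|Defs.support (asst2 a b)| = ((a != 0%N) + (b != 0%N))%N.
  rewrite -sum1_card big_mkcond /= !big_ord_recl big_ord0 /= !inE !ffunE /=.
  by case: a => [|a]; case: b => [|b].
rewrite Hc; clear Hc.
case: a => [|a]; case: b => [|b] //=.
congr (_ + _ * _).
rewrite big_mkcond /= !big_ord_recl big_ord0 /= !inE !ffunE /= addr0.
by rewrite dec0 dec1.
Qed.

Lemma fuelI f : forall g a b, (a + b <= f)%N -> (a + b <= g)%N ->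
  h_fuel f (asst2 a b) = h_fuel g (asst2 a b).
Proof.
elim: f => [|f IH] g a b Hf Hg.
  move: Hf; rewrite leqn0 addn_eq0 => /andP[/eqP-> /eqP->].
  by case: g {Hg} => [|g] //; rewrite step.
case: g Hg => [|g] Hg.
  move: Hg; rewrite leqn0 addn_eq0 => /andP[/eqP-> /eqP->].
  by rewrite step.
rewrite !step; case: a Hf Hg => [|a]; case: b => [|b] //= Hf Hg.
congr (_ + _ * (_ + _)); apply: IH; rewrite ?addnS ?addSn in Hf Hg *; by [].
Qed.

Definition F a b := h (asst2 a b).

Lemma hF a b : F a b = h_fuel (a + b) (asst2 a b).
Proof. by rewrite /F /h big_ord_recl big_ord1 !ffunE. Qed.

Lemma F0l b : F 0 b = 0.
Proof. by rewrite hF; case: b => [|b] //; rewrite step. Qed.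
Lemma F0r a : F a 0 = 0.
Proof. by rewrite hF; case: a => [|a]; rewrite ?addn0 // step orbT. Qed.
Lemma FS a b : F a.+1 b.+1 = 1 + 2%:R^-1 * (F a b.+1 + F a.+1 b).
Proof.
rewrite [LHS]hF addSn step /= (hF a) (hF a.+1).
congr (_ + _ * (_ + _)); apply: fuelI; by rewrite ?addnS ?addSn.
Qed.

Lemma Fsym n : forall a b, (a + b <= n)%N -> F a b = F b a.
Proof.
elim: n => [|n IH] [|a] [|b] //= H; rewrite ?F0l ?F0r //.
rewrite !FS [F b _ + _]addrC; congr (_ + _ * (_ + _)); apply: IH; rewrite ?addnS ?addSn in H *; by [].
Qed.

Lemma Fge0 n : forall a b, (a + b <= n)%N -> 0 <= F a b.
Proof.
elim: n => [|n IH] [|a] [|b] //= H; rewrite ?F0l ?F0r //.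
rewrite FS addr_ge0 // mulr_ge0 // ?invr_ge0 ?ler0n // addr_ge0 //; apply: IH;
  rewrite ?addnS ?addSn in H *; by [].
Qed.

Lemma Fmain n : forall a b, (a + b <= n)%N -> (a <= b)%N -> F a b.+1 <= F a.+1 b.
Proof.
elim: n => [|n IH] a b Hn Hab.
  move: Hn; rewrite leqn0 addn_eq0 => /andP[/eqP-> /eqP->].
  by rewrite F0l F0r.
case: (eqVneq a b) => [->|Hne].
  by rewrite (Fsym (b + b.+1)%N).
case: a Hn Hab Hne => [|a] Hn Hab Hne.
  by rewrite F0l (Fge0 (1 + b)%N).
case: b Hn Hab Hne => [|b] // Hn Hab Hne.
have Hlt : (a < b)%N by rewrite ltn_neqAle -eqSS Hne.
rewrite (FS a b.+1) (FS a.+1 b) lerD2l ler_pM2l ?invr_gt0 ?ltr0n // [X in _ <= X]addrC lerD2r.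
apply: (le_trans (y := F a.+1 b.+1)).
  by apply: IH; lia.
by apply: IH; lia.
Qed.

Theorem lemma1 (n1 n2 : nat) :
  let s := minn n1 n2 in
  let l := maxn n1 n2 in
  (s < l)%N -> (0 < s)%N ->
  h (asst2 s l.+1) <= h (asst2 s.+1 l).
Proof.
move=> s l Hsl _.
exact: (Fmain (s + l)%N) (leqnn _) (ltnW Hsl).
Qed.
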